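(* Let $I$ be a nonempty set and let $\mathcal{M}_I$ be the Banach algebra whose underlying Banach space is $\ell^1(I\times I)$ with product $(ab)(i,j)=\sum_{k\in I}a(i,k)b(k,j)$ for $a,b\in\mathcal{M}_I$, $i,j\in I$. Regard $\ell^1(I)$ as a Banach $\mathcal{M}_I$-bimodule via $(a\cdot b)(i)=\sum_{k\in I}a(i,k)b(k)$ and $(b\cdot a)(i)=\sum_{k\in I}b(k)a(k,i)$ for $a\in\mathcal{M}_I$, $b\in\ell^1(I)$, $i\in I$. Then the map $\nu:\ell^1(I)\hat{\otimes}_{\mathcal{M}_I}\ell^1(I)\to\mathbb{C}$ determined by $\nu(a\otimes b)=\sum_{i\in I}a(i)b(i)$ is a well-defined isomorphism of Banach spaces (the first factor being regarded as a right and the second as a left $\mathcal{M}_I$-module).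
   Context: $\hat{\otimes}$ denotes the completed projective tensor product of Banach spaces. For a Banach algebra $A$, a right Banach $A$-module $E$ and a left Banach $A$-module $F$, the module tensor product $E\hat{\otimes}_A F$ is the quotient Banach space $(E\hat{\otimes}F)/N$, where $N$ is the closed linear span of $\{x\cdot a\otimes y-x\otimes a\cdot y: x\in E,\ y\in F,\ a\in A\}$. *)

(* Defs.v *)
From HB Require Import structures.
From mathcomp Require Import all_boot all_order all_algebra.
From mathcomp Require Import all_classical all_reals.
From mathcomp Require Import complex.
Set Implicit Arguments. Unset Strict Implicit. Unset Printing Implicit Defensive.
Import Order.TTheory GRing.Theory Num.Theory.
Local Open Scope ring_scope.
Local Open Scope complex_scope.

Section L1.
Variable R : realType.
Notation C := (R[i]).

Definition summable (I : choiceType) (f : I -> C) : Prop :=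
  exists M : C, forall s : seq I, uniq s -> \sum_(i <- s) `|f i| <= M.

Definition has_sum (I : choiceType) (f : I -> C) (l : C) : Prop :=
  forall e : C, 0 < e -> exists s0 : seq I, forall s : seq I,
    uniq s -> {subset s0 <= s} -> `|\sum_(i <- s) f i - l| <= e.

Definition lsum (I : choiceType) (f : I -> C) : C := xget 0 [set l | has_sum f l].

Definition l1norm (I : choiceType) (f : I -> C) : C := lsum (fun i => `|f i|).

Definition lact (I : choiceType) (a : I * I -> C) (y : I -> C) : I -> C :=
  fun i => lsum (fun k => a (i, k) * y k).
Definition ract (I : choiceType) (x : I -> C) (a : I * I -> C) : I -> C :=
  fun i => lsum (fun k => x k * a (k, i)).

Definition bilform (I : choiceType) := (I -> C) -> (I -> C) -> C.

Definition bbil1 (I : choiceType) (phi : bilform I) : Prop :=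
  (forall (c : C) x x' y, summable x -> summable x' -> summable y ->
     phi (c *: x + x') y = c * phi x y + phi x' y) /\
  (forall (c : C) x y y', summable x -> summable y -> summable y' ->
     phi x (c *: y + y') = c * phi x y + phi x y') /\
  (forall x y, summable x -> summable y -> `|phi x y| <= l1norm x * l1norm y).

(* Completed projective tensor product l^1(I) \hat\otimes l^1(I), realized
   (isometrically) as the norm closure of the algebraic tensor product inside
   its bidual, i.e. inside the dual of the space of bounded bilinear forms. *)
Definition tens (I : choiceType) := bilform I -> C.

Definition elt (I : choiceType) (x y : I -> C) : tens I := fun phi => phi x y.

(* projective norm of T is <= c  (dual norm over the unit ball of forms) *)
Definition pnorm_le (I : choiceType) (T : tens I) (c : C) : Prop :=
  forall phi, bbil1 phi -> `|T phi| <= c.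

Definition ptens (I : choiceType) : set (tens I) :=
  [set T | forall e : C, 0 < e -> exists s : seq ((I -> C) * (I -> C)),
     (forall p, p \in s -> summable p.1 /\ summable p.2) /\
     pnorm_le (T - \sum_(p <- s) elt p.1 p.2) e].

(* N : closed linear span of the x.a (x) y - x (x) a.y *)
Definition balanced_gen (I : choiceType) (x : I -> C) (a : I * I -> C) (y : I -> C)
  : tens I := elt (ract x a) y - elt x (lact a y).

Definition Nsub (I : choiceType) : set (tens I) :=
  [set U | forall e : C, 0 < e ->
     exists s : seq (C * ((I -> C) * (I * I -> C) * (I -> C))),
     (forall p, p \in s ->
        [/\ summable p.2.1.1, summable p.2.1.2 & summable p.2.2]) /\
     pnorm_le (U - \sum_(p <- s) p.1 *: balanced_gen p.2.1.1 p.2.1.2 p.2.2) e].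

(* quotient norm of the class of T in (l^1 \hat\otimes l^1)/N is <= d *)
Definition qnorm_le (I : choiceType) (T : tens I) (d : C) : Prop :=
  forall e : C, 0 < e -> exists U, Nsub U /\ pnorm_le (T - U) (d + e).

End L1.

(* Main.v *)
Require Import Defs.
From HB Require Import structures.
From mathcomp Require Import all_boot all_order all_algebra.
From mathcomp Require Import all_classical all_reals.
From mathcomp Require Import complex ring lra.
Import Order.TTheory GRing.Theory Num.Theory.
Local Open Scope ring_scope.
Local Open Scope complex_scope.
Set Implicit Arguments. Unset Strict Implicit. Unset Printing Implicit Defensive.

Section Aux.
Variable R : realType.
Local Notation C := (R[i]).

Lemma small0 (x : C) : (forall e : C, 0 < e -> `|x| <= e) -> x = 0.
Proof.
move=> H; apply/normr0_eq0/eqP; rewrite eq_le normr_ge0 andbT.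
apply/ler_addgt0Pr => e e0; rewrite add0r; exact: H.
Qed.

Lemma le_eps (a d : C) : (forall e : C, 0 < e -> a <= d + e) -> a <= d.
Proof. by move=> H; apply/ler_addgt0Pr. Qed.

Lemma sum_sub (T : eqType) (f : T -> C) (s t : seq T) :
  uniq s -> uniq t -> {subset s <= t} ->
  \sum_(i <- t) f i = \sum_(i <- s) f i + \sum_(i <- t | i \notin s) f i.
Proof.
move=> us ut st; rewrite (bigID (fun i => i \in s)) /=; congr (_ + _).
rewrite -big_filter; apply: perm_big; apply: uniq_perm.
- exact: filter_uniq.
- exact: us.
by move=> x; rewrite mem_filter; case xs: (x \in s) => //=; rewrite st.
Qed.

Lemma sum_mono (T : eqType) (f : T -> C) (s t : seq T) :
  (forall i, 0 <= f i) -> uniq s -> uniq t -> {subset s <= t} ->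
  \sum_(i <- s) f i <= \sum_(i <- t) f i.
Proof.
move=> f0 us ut st; rewrite (sum_sub f us ut st) lerDl.
by apply: sumr_ge0 => i _.
Qed.

Lemma has_sum_unique (T : choiceType) (f : T -> C) l l' :
  has_sum f l -> has_sum f l' -> l = l'.
Proof.
move=> H H'; apply/eqP; rewrite -subr_eq0; apply/eqP/small0 => e e0.
have e20 : 0 < e / 2 by rewrite divr_gt0.
have [s0 Hs0] := H _ e20; have [s1 Hs1] := H' _ e20.
set s := undup (s0 ++ s1).
have us : uniq s by apply: undup_uniq.
have A := Hs0 s us; have B := Hs1 s us.
have : `|l - l'| <= `|\sum_(i <- s) f i - l'| + `|\sum_(i <- s) f i - l| .
  have -> : l - l' = (\sum_(i <- s) f i - l') - (\sum_(i <- s) f i - l) by ring.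
  exact: ler_normB.
move=> /le_trans; apply; rewrite [e](splitr e); apply: lerD.
  by apply: B => x xs; rewrite mem_undup mem_cat xs orbT.
by apply: A => x xs; rewrite mem_undup mem_cat xs.
Qed.

Lemma lsumE (T : choiceType) (f : T -> C) l : has_sum f l -> lsum f = l.
Proof.
move=> H; apply: xget_unique => // y Hy; exact: has_sum_unique Hy H.
Qed.


Lemma has_sum_add (T : choiceType) (f g : T -> C) l m :
  has_sum f l -> has_sum g m -> has_sum (fun i => f i + g i) (l + m).
Proof.
move=> H H' e e0.
have e20 : 0 < e / 2 by rewrite divr_gt0.
have [s0 Hs0] := H _ e20; have [s1 Hs1] := H' _ e20.
exists (s0 ++ s1) => s us ss.
rewrite big_split /=.
have -> : \sum_(i <- s) f i + \sum_(i <- s) g i - (l + m) =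
  (\sum_(i <- s) f i - l) + (\sum_(i <- s) g i - m) by ring.
apply: (le_trans (ler_normD _ _)); rewrite [e](splitr e); apply: lerD.
  by apply: Hs0 => // x xs; apply: ss; rewrite mem_cat xs.
by apply: Hs1 => // x xs; apply: ss; rewrite mem_cat xs orbT.
Qed.

Lemma has_sum_scale (T : choiceType) (f : T -> C) l c :
  has_sum f l -> has_sum (fun i => c * f i) (c * l).
Proof.
move=> H e e0.
have c1 : 0 < `|c| + 1 by rewrite ltr_wpDl.
have e1 : 0 < e / (`|c| + 1) by rewrite divr_gt0.
have [s0 Hs0] := H _ e1; exists s0 => s us ss.
rewrite -mulr_sumr -mulrBr normrM.
apply: (le_trans (ler_wpM2l (normr_ge0 _) (Hs0 s us ss))).
apply: (@le_trans _ _ ((`|c| + 1) * (e / (`|c| + 1)))).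
  by apply: ler_wpM2r; [exact: ltW | rewrite lerDl].
by rewrite mulrC divfK // gt_eqF.
Qed.

Lemma has_sum_fin (T : choiceType) (f : T -> C) (s0 : seq T) :
  (forall i, i \notin s0 -> f i = 0) ->
  has_sum f (\sum_(i <- undup s0) f i).
Proof.
move=> H e e0; exists (undup s0) => s us ss.
rewrite (sum_sub f (undup_uniq s0) us ss) addrAC subrr add0r big1 ?normr0 ?ltW //.
by move=> i; rewrite mem_undup => /H.
Qed.

Lemma has_sum0 (T : choiceType) : has_sum (fun _ : T => (0 : C)) 0.
Proof.
move=> e e0; exists [::] => s _ _; rewrite big1 // subrr normr0 ltW //.
Qed.

Lemma realC_ge0 (x : C) : 0 <= x -> x = (complex.Re x)%:C.
Proof. by case: x => a b; rewrite lecE /= => /andP[/eqP -> _]. Qed.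

Lemma normcR (a : R) : `|a%:C| = `|a|%:C.
Proof. by rewrite normc_def /= expr0n /= addr0 sqrtr_sqr. Qed.

Lemma has_sum_pos (T : choiceType) (f : T -> C) (M : C) :
  (forall i, 0 <= f i) -> (forall s, uniq s -> \sum_(i <- s) f i <= M) ->
  exists l, has_sum f l /\ (forall s, uniq s -> \sum_(i <- s) f i <= l).
Proof.
move=> f0 HM.
pose E : set R := fun r => exists2 s, uniq s & r = complex.Re (\sum_(i <- s) f i).
have PE s : 0 <= \sum_(i <- s) f i by apply: sumr_ge0.
have M0 : 0 <= M by have := HM [::] isT; rewrite big_nil.
have hE : has_sup E.
  split; first by exists 0; exists [::] => //; rewrite big_nil.
  exists (complex.Re M) => r [s us ->].
  by rewrite -lecR -!realC_ge0 // HM.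
exists (sup E)%:C; split; last first.
  move=> s us; rewrite (realC_ge0 (PE s)) lecR.
  by apply: sup_upper_bound => //; exists s.
move=> e e0.
have e0' : 0 < complex.Re e by rewrite -ltcR -realC_ge0 // ltW.
have [r [s0 us0 ->] Hr] := sup_adherent e0' hE.
exists s0 => s us ss.
have Hle : complex.Re (\sum_(i <- s0) f i) <= complex.Re (\sum_(i <- s) f i).
  by rewrite -lecR -!realC_ge0 //; apply: sum_mono.
have Hs : complex.Re (\sum_(i <- s) f i) <= sup E.
  by apply: sup_upper_bound => //; exists s.
rewrite (realC_ge0 (PE s)) -rmorphB normcR (realC_ge0 (ltW e0)) lecR.
rewrite ler_norml; apply/andP; split; lra.
Qed.


Lemma Re_le (w : C) : 'Re w <= `|w| /\ - 'Re w <= `|w|.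
Proof.
have Hr : 'Re w \is Num.real by apply: Creal_Re.
have H2 : `|'Re w| <= `|w| by have := leif_normC_Re_Creal w => -[].
split; apply: le_trans H2.
  exact: real_ler_norm.
by rewrite -normrN; apply: real_ler_norm; rewrite realN.
Qed.

Lemma summable_bound (T : choiceType) (f : T -> C) M :
  (forall s, uniq s -> \sum_(i <- s) `|f i| <= M) -> 0 <= M.
Proof. by move=> H; have := H [::] isT; rewrite big_nil. Qed.

Lemma summable_has_sum (T : choiceType) (f : T -> C) :
  summable f -> exists l, has_sum f l.
Proof.
move=> [M HM].
have M0 := summable_bound HM.
have bnd (g : T -> C) : (forall i, 0 <= g i) -> (forall i, g i <= 2 * `|f i|) ->
    exists l, has_sum g l.
  move=> g0 g2.
  have HM2 : forall s, uniq s -> \sum_(i <- s) g i <= 2 * M.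
    move=> s us; apply: (le_trans (ler_sum _ (fun i _ => g2 i))).
    by rewrite -mulr_sumr ler_wpM2l // HM.
  have [l [Hl _]] := has_sum_pos g0 HM2; by exists l.
have [l1 H1] : exists l, has_sum (fun i => `|f i| + 'Re (f i)) l.
  apply: bnd => i; have [A B] := Re_le (f i).
    by rewrite -subr_ge0 opprK in B.
  by rewrite mulr2n mulrDl mul1r lerD2l.
have [l2 H2] : exists l, has_sum (fun i => `|f i|) l.
  apply: bnd => i //; by rewrite -[X in X <= _]mul1r ler_wpM2r // ler1n.
have [l3 H3] : exists l, has_sum (fun i => `|f i| - 'Re ('i * f i)) l.
  apply: bnd => i; have [A B] := Re_le ('i * f i); rewrite normrM normCi mul1r in A B.
    by rewrite subr_ge0.
  by rewrite mulr2n mulrDl mul1r lerD2l.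
exists ((l1 - l2) + 'i * (l3 - l2)).
have HN : forall (g : T -> C) l, has_sum g l -> has_sum (fun i => - g i) (- l).
  move=> g l Hg; have := has_sum_scale (-1) Hg; rewrite mulN1r.
  by congr has_sum; apply/funext => i; rewrite mulN1r.
have := has_sum_add (has_sum_add H1 (HN _ _ H2))
        (has_sum_scale 'i (has_sum_add H3 (HN _ _ H2))).
congr has_sum; apply/funext => i /=.
rewrite [RHS]Crect ReMil; ring.
Qed.


Lemma has_sum_lsum (T : choiceType) (f : T -> C) : summable f -> has_sum f (lsum f).
Proof. by move=> /summable_has_sum [l Hl]; rewrite (lsumE Hl). Qed.

Lemma l1_ge (T : choiceType) (f : T -> C) : summable f ->
  forall s, uniq s -> \sum_(i <- s) `|f i| <= l1norm f.
Proof.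
move=> [M HM]; have [l [Hl Hb]] := has_sum_pos (fun i => normr_ge0 (f i)) HM.
by rewrite /l1norm (lsumE Hl).
Qed.

Lemma l1_ge0 (T : choiceType) (f : T -> C) : summable f -> 0 <= l1norm f.
Proof. by move=> /l1_ge H; have := H [::] isT; rewrite big_nil. Qed.

Lemma l1_pt (T : choiceType) (f : T -> C) i : summable f -> `|f i| <= l1norm f.
Proof. by move=> /l1_ge H; have := H [:: i] isT; rewrite big_seq1. Qed.

Lemma has_sum_normle (T : choiceType) (f : T -> C) L B :
  has_sum f L -> (forall s, uniq s -> `|\sum_(i <- s) f i| <= B) -> `|L| <= B.
Proof.
move=> H Hb; apply: le_eps => e e0.
have [s0 Hs0] := H _ e0.
have A := Hs0 (undup s0) (undup_uniq _) (fun x => ltac:(by rewrite mem_undup)).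
have -> : L = \sum_(i <- undup s0) f i - (\sum_(i <- undup s0) f i - L) by ring.
apply: (le_trans (ler_normB _ _)); apply: lerD => //.
exact: (Hb _ (undup_uniq _)).
Qed.

Lemma summable_dom (T : choiceType) (f g : T -> C) c :
  summable f -> 0 <= c -> (forall i, `|g i| <= c * `|f i|) -> summable g.
Proof.
move=> [M HM] c0 H; exists (c * M) => s us.
apply: (le_trans (ler_sum _ (fun i _ => H i))).
by rewrite -mulr_sumr ler_wpM2l // HM.
Qed.

Lemma summable_fin (T : choiceType) (f : T -> C) (s0 : seq T) :
  (forall i, i \notin s0 -> f i = 0) -> summable f.
Proof.
move=> H; exists (\sum_(i <- undup s0) `|f i|) => s us.
rewrite (bigID (fun i => i \in s0)) /= [X in _ + X]big1 ?addr0; last first.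
  by move=> i /H ->; rewrite normr0.
rewrite -big_filter; apply: sum_mono => //.
- by apply: filter_uniq.
- exact: undup_uniq.
by move=> x; rewrite mem_filter mem_undup => /andP[].
Qed.

Lemma has_sum_pt (T : choiceType) (f : T -> C) i0 :
  (forall i, i != i0 -> f i = 0) -> has_sum f (f i0).
Proof.
move=> H; have := @has_sum_fin _ f [:: i0].
rewrite /= big_seq1; apply => i; rewrite inE; exact: H.
Qed.

Lemma has_sum_swap (T : choiceType) (h : T * T -> C) L :
  has_sum h L -> has_sum (fun p => h (p.2, p.1)) L.
Proof.
move=> H e e0; have [s0 Hs0] := H _ e0.
exists (map (fun p => (p.2, p.1)) s0) => s us ss.
have inj : injective (fun p : T * T => (p.2, p.1)) by move=> [a b] [c d] [-> ->].
have := Hs0 (map (fun p => (p.2, p.1)) s) _ _; rewrite big_map; apply.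
  by rewrite map_inj_uniq.
move=> [a b] ab; apply/mapP; exists (b, a) => //.
by apply: ss; apply/mapP; exists (a, b).
Qed.

Lemma has_sum_big (T : choiceType) (h : T * T -> C) (F : T -> C) (S : seq T) :
  (forall i, has_sum (fun k => h (k, i)) (F i)) ->
  has_sum (fun k => \sum_(i <- S) h (k, i)) (\sum_(i <- S) F i).
Proof.
move=> H; elim: S => [|i S IH].
  rewrite big_nil; have := @has_sum0 T; congr has_sum.
  by apply/funext => k; rewrite big_nil.
rewrite big_cons; have := has_sum_add (H i) IH; congr has_sum.
by apply/funext => k; rewrite big_cons.
Qed.

Lemma fubini (T : choiceType) (h : T * T -> C) (F : T -> C) L :
  has_sum h L -> (forall i, has_sum (fun k => h (k, i)) (F i)) -> has_sum F L.
Proof.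
move=> H HF e e0.
have e20 : 0 < e / 2 by rewrite divr_gt0.
have [s1 Hs1] := H _ e20.
exists (map snd s1) => S uS sS.
have [K0 HK0] := has_sum_big S HF e20.
pose K := undup (K0 ++ map fst s1).
pose Q := [seq (k, i) | k <- K, i <- S].
have uQ : uniq Q by apply: allpairs_uniq => //; [exact: undup_uniq | move=> [a b] [c d] _ _ /= [-> ->]].
have sQ : {subset s1 <= Q}.
  move=> p ps; apply/allpairsP; exists p; split.
  - by rewrite mem_undup mem_cat; apply/orP; right; apply/mapP; exists p.
  - by apply: sS; apply/mapP; exists p.
  by case: p {ps}.
have A := Hs1 Q uQ sQ.
have B := HK0 K (undup_uniq _) (fun x xK => ltac:(by rewrite mem_undup mem_cat xK)).
rewrite /Q big_allpairs in A.
set X := \sum_(k <- K) \sum_(i <- S) h (k, i) in A B.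
have -> : \sum_(i <- S) F i - L = (X - L) - (X - \sum_(i <- S) F i) by ring.
by apply: (le_trans (ler_normB _ _)); rewrite [e](splitr e); apply: lerD.
Qed.


Lemma summable_mul (T : choiceType) (x y : T -> C) :
  summable x -> summable y -> summable (fun i => x i * y i).
Proof.
move=> sx sy; apply: (summable_dom sx (l1_ge0 sy)) => i.
by rewrite normrM mulrC ler_wpM2r // l1_pt.
Qed.

Lemma summable_slice1 (T : choiceType) (a : T * T -> C) i :
  summable a -> summable (fun k => a (k, i)).
Proof.
move=> [M HM]; exists M => s us.
have := HM (map (fun k => (k, i)) s); rewrite big_map; apply.
by rewrite map_inj_uniq // => u v [].
Qed.

Lemma summable_slice2 (T : choiceType) (a : T * T -> C) k :
  summable a -> summable (fun i => a (k, i)).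
Proof.
move=> [M HM]; exists M => s us.
have := HM (map (fun i => (k, i)) s); rewrite big_map; apply.
by rewrite map_inj_uniq // => u v [].
Qed.

Definition phi0 (T : choiceType) : bilform R T := fun x y => lsum (fun i => x i * y i).

Lemma phi0_bbil (T : choiceType) : bbil1 (@phi0 T).
Proof.
split; [|split].
- move=> c x x' y sx sx' sy; rewrite /phi0.
  have := has_sum_add (has_sum_scale c (has_sum_lsum (summable_mul sx sy)))
                      (has_sum_lsum (summable_mul sx' sy)).
  move=> H; rewrite -(lsumE H); congr lsum; apply/funext => i /=.
  have -> : (c *: x + x') i = c * x i + x' i by []. ring.
- move=> c x y y' sx sy sy'; rewrite /phi0.
  have := has_sum_add (has_sum_scale c (has_sum_lsum (summable_mul sx sy)))
                      (has_sum_lsum (summable_mul sx sy')).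
  move=> H; rewrite -(lsumE H); congr lsum; apply/funext => i /=.
  have -> : (c *: y + y') i = c * y i + y' i by []. ring.
- move=> x y sx sy; apply: has_sum_normle (has_sum_lsum (summable_mul sx sy)) _.
  move=> s us; apply: (le_trans (ler_norm_sum _ _ _)).
  apply: (@le_trans _ _ (\sum_(i <- s) `|x i| * l1norm y)).
    by apply: ler_sum => i _; rewrite normrM ler_wpM2l // l1_pt.
  by rewrite -mulr_suml ler_wpM2r ?l1_ge0 // l1_ge.
Qed.

Lemma phi0_gen (T : choiceType) (x : T -> C) (a : T * T -> C) (y : T -> C) :
  summable x -> summable a -> summable y ->
  phi0 (ract x a) y = phi0 x (lact a y).
Proof.
move=> sx sa sy.
pose h := fun p : T * T => x p.1 * a p * y p.2.
have sh : summable h.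
  apply: (summable_dom sa (mulr_ge0 (l1_ge0 sx) (l1_ge0 sy))) => -[k i].
  rewrite /h /= !normrM mulrAC; apply: ler_wpM2r => //.
  by apply: ler_pM => //; apply: l1_pt.
have Hh := has_sum_lsum sh.
have Hi : forall i, has_sum (fun k => h (k, i)) (ract x a i * y i).
  move=> i; have sk : summable (fun k => x k * a (k, i)).
    by apply: summable_mul => //; apply: summable_slice1.
  have := has_sum_scale (y i) (has_sum_lsum sk); rewrite mulrC.
  by congr has_sum; apply/funext => k; rewrite /h /= mulrC.
have Hk : forall k, has_sum (fun i => h (k, i)) (x k * lact a y k).
  move=> k; have sk : summable (fun i => a (k, i) * y i).
    by apply: summable_mul => //; apply: summable_slice2.
  have := has_sum_scale (x k) (has_sum_lsum sk).
  by congr has_sum; apply/funext => i; rewrite /h /= mulrA.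
rewrite /phi0 (lsumE (fubini Hh Hi)).
have := fubini (has_sum_swap Hh) Hk; move/lsumE => ->; done.
Qed.


Lemma sum_app (T : choiceType) (J : Type) (F : J -> tens R T) (s : seq J) phi :
  (\sum_(p <- s) F p) phi = \sum_(p <- s) F p phi.
Proof. by elim: s => [|p s IH]; rewrite ?big_nil // !big_cons -IH. Qed.

Lemma l1norm0 (T : choiceType) : l1norm (0 : T -> C) = 0.
Proof.
rewrite /l1norm; apply: lsumE; have := @has_sum0 T; congr has_sum.
by apply/funext => i; rewrite normr0.
Qed.

Lemma bbil_y0 (T : choiceType) (phi : bilform R T) x :
  bbil1 phi -> summable x -> phi x 0 = 0.
Proof.
move=> [_ [_ Hb]] sx; have s0 : summable (0 : T -> C).
  by apply: (@summable_fin _ _ [::]) => i _.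
have := Hb x 0 sx s0; rewrite l1norm0 mulr0 => H.
by apply/normr0_eq0/eqP; rewrite eq_le H normr_ge0.
Qed.

Lemma bbil_scale2 (T : choiceType) (phi : bilform R T) x y c :
  bbil1 phi -> summable x -> summable y -> phi x (c *: y) = c * phi x y.
Proof.
move=> Hp sx sy; have [_ [H2 _]] := Hp.
have s0 : summable (0 : T -> C) by apply: (@summable_fin _ _ [::]) => i _.
by have := H2 c x y 0 sx sy s0; rewrite addr0 bbil_y0 // addr0.
Qed.

Section Main.
Variables (I : choiceType) (i0 : I).

Definition delta : I -> C := fun i => if i == i0 then 1 else 0.
Definition Amat (x : I -> C) : I * I -> C := fun p => if p.1 == i0 then x p.2 else 0.

Lemma summable_zdelta (z : C) : summable (z *: delta).
Proof.
apply: (@summable_fin _ _ [:: i0]) => i; rewrite inE => /negbTE Hi.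
by have -> : (z *: delta) i = z * delta i by []; rewrite /delta Hi mulr0.
Qed.

Lemma summable_delta : summable delta.
Proof.
apply: (@summable_fin _ _ [:: i0]) => i; rewrite inE => /negbTE Hi.
by rewrite /delta Hi.
Qed.

Lemma summable_Amat x : summable x -> summable (Amat x).
Proof.
move=> [M HM]; exists M => s us.
rewrite (bigID (fun p => p.1 == i0)) /= [X in _ + X]big1 ?addr0; last first.
  by move=> p /negbTE Hp; rewrite /Amat Hp normr0.
rewrite -big_filter.
have -> : \sum_(p <- [seq p <- s | p.1 == i0]) `|Amat x p| =
          \sum_(k <- map snd [seq p <- s | p.1 == i0]) `|x k|.
  rewrite big_map big_seq [RHS]big_seq; apply: eq_bigr => p.
  by rewrite mem_filter /Amat => /andP[-> _].
apply: HM; rewrite map_inj_in_uniq ?filter_uniq //.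
move=> [a b] [c d]; rewrite !mem_filter /= => /andP[/eqP -> _] /andP[/eqP -> _] ->.
done.
Qed.

Lemma l1_delta : l1norm delta = 1.
Proof.
rewrite /l1norm; have := @has_sum_pt _ (fun i => `|delta i|) i0.
rewrite /delta eqxx normr1 => H; apply: lsumE; apply: H => i /negbTE ->.
by rewrite normr0.
Qed.

Lemma ract_delta x : ract delta (Amat x) = x.
Proof.
apply/funext => i; rewrite /ract; apply: lsumE.
have := @has_sum_pt _ (fun k => delta k * Amat x (k, i)) i0.
rewrite /delta /Amat /= eqxx mul1r; apply => k /negbTE ->; by rewrite mul0r.
Qed.

Lemma lact_Amat x y : lact (Amat x) y = phi0 x y *: delta.
Proof.
apply/funext => i; have -> : (phi0 x y *: delta) i = phi0 x y * delta i by [].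
rewrite /lact /Amat /= /delta.
case: (i == i0); first by rewrite mulr1.
rewrite mulr0; apply: lsumE; have := @has_sum0 I; congr has_sum.
by apply/funext => k; rewrite mul0r.
Qed.

End Main.

End Aux.

Theorem lemma1 (R : realType) (I : choiceType) (i0 : I) :
  exists nu : tens R I -> R[i],
    (* nu is linear on l^1(I) \hat\otimes l^1(I) *)
    (forall (c : R[i]) T U, ptens T -> ptens U ->
       nu (c *: T + U) = c * nu T + nu U) /\
    (* nu (a (x) b) = sum_i a(i) b(i) *)
    (forall a b : I -> R[i], summable a -> summable b ->
       nu (elt a b) = lsum (fun i => a i * b i)) /\
    (* well-defined and bounded on the quotient by N *)
    (exists K : R[i], 0 < K /\
       forall T d, ptens T -> qnorm_le T d -> `|nu T| <= K * d) /\
    (* surjective onto C *)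
    (forall z : R[i], exists T, ptens T /\ nu T = z) /\
    (* injective on the quotient, with bounded inverse *)
    (exists c : R[i], 0 < c /\ forall T, ptens T -> qnorm_le T (c * `|nu T|)).
Proof.
have Pb := @phi0_bbil R I.
exists (fun T => T (@phi0 R I)).
split; [|split; [|split; [|split]]].
- by move=> c T U _ _.
- by move=> a b _ _.
- exists 1; split; first exact: ltr01.
  move=> T d _ Hq; rewrite mul1r; apply: le_eps => e e0.
  have e20 : 0 < e / 2 by rewrite divr_gt0.
  have [U [HU HTU]] := Hq _ e20.
  have [s [hs HUs]] := HU _ e20.
  have HU0 : `|U (@phi0 R I)| <= e / 2.
    have := HUs _ Pb.
    have -> : (U - \sum_(p <- s) p.1 *: balanced_gen p.2.1.1 p.2.1.2 p.2.2) (@phi0 R I)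
      = U (@phi0 R I) - (\sum_(p <- s) p.1 *: balanced_gen p.2.1.1 p.2.1.2 p.2.2) (@phi0 R I) by [].
    rewrite sum_app big_seq big1 ?subr0 // => p ps.
    have [h1 h2 h3] := hs p ps.
    have -> : (p.1 *: balanced_gen p.2.1.1 p.2.1.2 p.2.2) (@phi0 R I) =
      p.1 * (phi0 (ract p.2.1.1 p.2.1.2) p.2.2 - phi0 p.2.1.1 (lact p.2.1.2 p.2.2)) by [].
    by rewrite phi0_gen // subrr mulr0.
  have HTU0 : `|T (@phi0 R I) - U (@phi0 R I)| <= d + e / 2 := HTU _ Pb.
  have -> : T (@phi0 R I) = (T (@phi0 R I) - U (@phi0 R I)) + U (@phi0 R I) by rewrite subrK.
  apply: (le_trans (ler_normD _ _)).
  have -> : d + e = (d + e / 2) + e / 2 by rewrite {1}(splitr e); ring.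
  exact: lerD.
- move=> z; exists (elt (z *: delta R i0) (delta R i0)); split.
  + move=> e e0; exists [:: (z *: delta R i0, delta R i0)]; split.
      move=> p; rewrite inE => /eqP -> /=; split; [exact: summable_zdelta | exact: summable_delta].
    move=> phi Pphi; rewrite big_seq1 subrr.
    by have -> : (0 : tens R I) phi = 0 by []; rewrite normr0 ltW.
  + rewrite /elt /phi0; apply: lsumE.
    have := @has_sum_pt _ _ (fun i => (z *: delta R i0) i * delta R i0 i) i0.
    have E : forall i, (z *: delta R i0) i = z * delta R i0 i by [].
    rewrite E /delta eqxx !mulr1; apply => i /negbTE Hi.
    by rewrite E Hi !mulr0.
- exists 1; split; first exact: ltr01.
  move=> T HT; rewrite mul1r => e e0.
  set z := T (@phi0 R I).
  have e20 : 0 < e / 2 by rewrite divr_gt0.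
  have [s [hs Hn]] := HT _ e20.
  exists (\sum_(p <- s) balanced_gen (delta R i0) (Amat i0 p.1) p.2); split.
  + move=> e' e'0; exists (map (fun p => (1, (delta R i0, Amat i0 p.1, p.2))) s); split.
      move=> q /mapP [p ps ->] /=; have [h1 h2] := hs p ps; split => //.
        exact: summable_delta.
      exact: summable_Amat.
    move=> phi Pphi; rewrite big_map /=.
    have -> : \sum_(p <- s) 1 *: balanced_gen (delta R i0) (Amat i0 p.1) p.2 =
              \sum_(p <- s) balanced_gen (delta R i0) (Amat i0 p.1) p.2.
      by apply: eq_bigr => p _; rewrite scale1r.
    by rewrite subrr; have -> : (0 : tens R I) phi = 0 by []; rewrite normr0 ltW.
  + move=> phi Pphi.
    have E : \sum_(p <- s) balanced_gen (delta R i0) (Amat i0 p.1) p.2 =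
      \sum_(p <- s) (elt p.1 p.2 - elt (delta R i0) (phi0 p.1 p.2 *: delta R i0)).
      rewrite big_seq [RHS]big_seq; apply: eq_bigr => p ps; have [h1 h2] := hs p ps.
      by rewrite /balanced_gen ract_delta lact_Amat.
    rewrite E sumrB.
    set S := \sum_(p <- s) elt p.1 p.2.
    set W := \sum_(p <- s) elt (delta R i0) (phi0 p.1 p.2 *: delta R i0).
    have -> : (T - (S - W)) phi = (T phi - S phi) + W phi.
      by change (T phi - (S phi - W phi) = T phi - S phi + W phi); ring.
    have HW : W phi = (\sum_(p <- s) phi0 p.1 p.2) * phi (delta R i0) (delta R i0).
      rewrite /W sum_app mulr_suml big_seq [RHS]big_seq; apply: eq_bigr => p ps.
      have [h1 h2] := hs p ps.
      by rewrite /elt bbil_scale2 //; exact: summable_delta.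
    have Hsum : \sum_(p <- s) phi0 p.1 p.2 = S (@phi0 R I) by rewrite /S sum_app.
    have Hd : `|phi (delta R i0) (delta R i0)| <= 1.
      have [_ [_ Hb]] := Pphi.
      by have := Hb _ _ (summable_delta R i0) (summable_delta R i0); rewrite l1_delta mulr1.
    have Hz : `|S (@phi0 R I)| <= `|z| + e / 2.
      have HnP : `|z - S (@phi0 R I)| <= e / 2 := Hn _ Pb.
      have -> : S (@phi0 R I) = z - (z - S (@phi0 R I)) by ring.
      by apply: (le_trans (ler_normB _ _)); apply: lerD.
    have H1 : `|T phi - S phi| <= e / 2 := Hn _ Pphi.
    have H2 : `|W phi| <= `|z| + e / 2.
      rewrite HW normrM Hsum; apply: (le_trans (ler_wpM2l (normr_ge0 _) Hd)).
      by rewrite mulr1.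
    apply: (le_trans (ler_normD _ _)).
    have -> : `|z| + e = e / 2 + (`|z| + e / 2) by rewrite {1}(splitr e); ring.
    exact: lerD.
Qed.
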